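(* Let $k\ge 0$, $m=2k+1$, and $ER_m(\hat K)=P_m(\hat K)+\mathrm{span}\{\hat x^{m}\hat y-\hat x\hat y^{m},\ \hat x^{m+1}-\hat y^{m+1}\}$. Suppose $\hat v\in ER_m(\hat K)$ satisfies $\int_{\hat e}\hat v\,q\,ds=0$ for every $q\in P_{2k}(\hat e)$ and every edge $\hat e$ of $\hat K$, and $\hat v$ vanishes at all points of $I$. Then $\hat v\equiv 0$.
   Context: $\hat K=[-1,1]^2$; $P_n(M)$ denotes polynomials of degree $\le n$ on $M$ (for an edge, polynomials of degree $\le n$ in the edge variable). $I$ is a set of $(2k-1)(k-1)$ interior points of $\hat K$ unisolvent for $P_{2k-3}(\hat K)$ (every polynomial in $P_{2k-3}(\hat K)$ is uniquely determined by its values on $I$); $I=\emptyset$ when $k\le 1$. *)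

(* Defs.v *)
From Stdlib Require Import Reals List.
Import ListNotations.
Open Scope R_scope.

Definition inK (x y : R) : Prop := -1 <= x <= 1 /\ -1 <= y <= 1.

Definition poly2 (n : nat) (c : nat -> nat -> R) (x y : R) : R :=
  sum_f_R0 (fun i => sum_f_R0 (fun j => c i j * x ^ i * y ^ j) (n - i)) n.

Definition inP2 (n : nat) (f : R -> R -> R) : Prop :=
  exists c : nat -> nat -> R, forall x y, inK x y -> f x y = poly2 n c x y.

Definition inER (m : nat) (f : R -> R -> R) : Prop :=
  exists (p : R -> R -> R) (a b : R), inP2 m p /\
    forall x y, inK x y ->
      f x y = p x y + a * (x ^ m * y - x * y ^ m) + b * (x ^ (S m) - y ^ (S m)).

Definition poly1 (n : nat) (d : nat -> R) (t : R) : R :=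
  sum_f_R0 (fun i => d i * t ^ i) n.

Definition edges : list (R -> R * R) :=
  [ (fun t => (t, -1)); (fun t => (1, t)); (fun t => (t, 1)); (fun t => (-1, t)) ].

Definition unisolvent (n : nat) (I : list (R * R)) : Prop :=
  forall p1 p2 : R -> R -> R, inP2 n p1 -> inP2 n p2 ->
    (forall z, In z I -> p1 (fst z) (snd z) = p2 (fst z) (snd z)) ->
    forall x y, inK x y -> p1 x y = p2 x y.

(* Main.v *)
Require Import Defs.
From Stdlib Require Import Reals List Lra.
Open Scope R_scope.
From Coquelicot Require Coquelicot.
From mathcomp Require all_boot all_order all_algebra Rstruct zify ring lra.
Module Ana.
Import Coquelicot.Coquelicot.

Lemma RInt_zero_pos f a b : a < b ->
  (forall x, a <= x <= b -> continuous f x) ->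
  (forall x, a < x < b -> 0 <= f x) ->
  RInt f a b = 0 -> forall x, a < x < b -> f x = 0.
Proof.
intros Hab Hc Hp HI x0 Hx0.
destruct (Req_dec (f x0) 0) as [E|E]; [exact E|exfalso].
assert (Hpos : 0 < f x0) by (generalize (Hp x0 Hx0); lra).
assert (Hcx := Hc x0 ltac:(lra)).
pose (eps := mkposreal _ (Rmult_lt_0_compat _ _ Hpos (Rinv_0_lt_compat 2 ltac:(lra)))).
destruct (proj1 (filterlim_locally f (f x0)) Hcx eps) as [del Hdel].
pose (d := Rmin (del/2) (Rmin ((x0-a)/2) ((b-x0)/2))).
assert (Hd1 : d <= del/2) by apply Rmin_l.
assert (Hd2 : d <= (x0-a)/2) by (eapply Rle_trans; [apply Rmin_r|apply Rmin_l]).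
assert (Hd3 : d <= (b-x0)/2) by (eapply Rle_trans; [apply Rmin_r|apply Rmin_r]).
assert (Hd0 : 0 < d).
{ unfold d. destruct del as [dl Hdl]; simpl in *.
  repeat apply Rmin_glb_lt; lra. }
assert (Hdel0 := cond_pos del).
assert (Hex : forall u v, a <= u -> u <= v -> v <= b -> ex_RInt f u v).
{ intros u v H1 H2 H3. apply (@ex_RInt_continuous R_CompleteNormedModule). intros z Hz.
  apply Hc. rewrite Rmin_left in Hz by lra. rewrite Rmax_right in Hz by lra. lra. }
assert (Hmid : 0 < RInt f (x0 - d) (x0 + d)).
{ apply RInt_gt_0; [lra| |].
  - intros y Hy.
    assert (Hb : ball x0 del y).
    { unfold ball; simpl; unfold AbsRing_ball, abs, minus, plus, opp; simpl.
      apply Rabs_def1; lra. }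
    specialize (Hdel y Hb). unfold ball in Hdel; simpl in Hdel;
    unfold AbsRing_ball, abs, minus, plus, opp in Hdel; simpl in Hdel.
    apply Rabs_def2 in Hdel. unfold eps in Hdel; simpl in Hdel. lra.
  - intros y Hy. apply Hc. lra. }
assert (H1 : 0 <= RInt f a (x0 - d)).
{ apply RInt_ge_0; [lra| apply Hex; lra | intros y Hy; apply Hp; lra]. }
assert (H3 : 0 <= RInt f (x0 + d) b).
{ apply RInt_ge_0; [lra| apply Hex; lra | intros y Hy; apply Hp; lra]. }
assert (C1 := RInt_Chasles f a (x0 - d) (x0 + d) ltac:(apply Hex; lra) ltac:(apply Hex; lra)).
assert (C2 := RInt_Chasles f a (x0 + d) b ltac:(apply Hex; lra) ltac:(apply Hex; lra)).
unfold plus in C1, C2; simpl in C1, C2. lra.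
Qed.

Lemma RInt_refl (f : R -> R) a : ex_RInt f (-a) a -> RInt (fun t => f (-t)) (-a) a = RInt f (-a) a.
Proof.
intros Hf.
assert (Hs : ex_RInt f a (-a)) by (apply ex_RInt_swap; exact Hf).
assert (Hg : ex_RInt (fun t => f (-t)) (-a) a).
{ assert (H1 : ex_RInt f (- - a) (-a)) by (rewrite Ropp_involutive; exact Hs).
  apply ex_RInt_comp_opp in H1. apply ex_RInt_opp in H1.
  eapply ex_RInt_ext; [|exact H1]. intros x _. simpl. unfold opp; simpl. ring. }
assert (H := RInt_comp_lin f (-1) 0 (-a) a).
replace (-1 * - a + 0) with a in H by ring.
replace (-1 * a + 0) with (-a) in H by ring.
specialize (H Hs).
rewrite <- (opp_RInt_swap f (-a) a Hf) in H.
rewrite (RInt_ext _ (fun y => opp (f (-y)))) in H.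
2:{ intros x _. unfold scal, opp; simpl. unfold mult; simpl. replace (-1 * x + 0) with (-x) by ring. ring. }
assert (E : RInt (fun y => opp (f (-y))) (-a) a = - RInt (fun y => f (-y)) (-a) a) by exact (RInt_opp _ _ _ Hg).
rewrite E in H. unfold opp in H; simpl in H. lra.
Qed.

Lemma Rle_m11 : -1 <= 1.
Proof. lra. Qed.

Lemma inK_edges t : -1 <= t <= 1 -> inK t (-1) /\ inK t 1 /\ inK 1 t /\ inK (-1) t.
Proof. intros H; unfold inK; repeat split; lra. Qed.

Lemma inK_int x y : (-1 < x < 1) /\ (-1 < y < 1) -> inK x y.
Proof. unfold inK; intros; lra. Qed.

Lemma Rlt_le2 t : -1 < t < 1 -> -1 <= t <= 1.
Proof. intros; lra. Qed.

End Ana.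

Module Aux.
Import Coquelicot.Coquelicot.
Import all_boot all_order all_algebra Rstruct zify ring lra.
Import Order.TTheory GRing.Theory Num.Theory.
Local Open Scope ring_scope.
Lemma cont_horner (p : {poly R}) x : continuous (fun t => p.[t]) x.
Proof.
elim/poly_ind: p => [|p c IH].
  have -> : (fun t : R => (0 : {poly R}).[t]) = (fun _ => 0).
    by apply: FunctionalExtensionality.functional_extensionality => t; rewrite horner0.
  exact: continuous_const.
have -> : (fun t : R => (p * 'X + c%:P).[t]) = (fun t => plus (mult p.[t] t) c).
  by apply: FunctionalExtensionality.functional_extensionality => t; rewrite hornerMXaddC.
apply: continuous_plus; last exact: continuous_const.
apply: continuous_mult => //; exact: continuous_id.
Qed.

Lemma exi (p : {poly R}) a b : ex_RInt (fun t => p.[t]) a b.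
Proof. by apply: ex_RInt_continuous => z _; apply: cont_horner. Qed.

Definition ip (p : {poly R}) := RInt (fun t => p.[t]) (-1) 1.

Lemma ipD p q : ip (p + q) = ip p + ip q.
Proof.
rewrite /ip -[RHS](RInt_plus _ _ _ _ (exi p _ _) (exi q _ _)).
by apply: RInt_ext => x _; rewrite hornerD.
Qed.

Lemma ipZ (c : R) p : ip (c *: p) = c * ip p.
Proof.
rewrite /ip -[RHS](RInt_scal _ _ _ _ (exi p _ _)).
by apply: RInt_ext => x _; rewrite hornerZ.
Qed.

Lemma ipN p : ip (- p) = - ip p.
Proof. by rewrite -scaleN1r ipZ mulN1r. Qed.

Lemma ipB p q : ip (p - q) = ip p - ip q.
Proof. by rewrite ipD ipN. Qed.

Lemma ip_zero_pos p : (forall t, -1 < t < 1 -> 0 <= p.[t]) -> ip p = 0 ->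
  forall t, -1 < t < 1 -> p.[t] = 0.
Proof.
move=> Hp H0 t /andP[/RltP H1 /RltP H2].
have h1 : Rlt (-1) 1 by apply/RltP; rewrite gtrN.
apply: (Ana.RInt_zero_pos (fun t => p.[t]) (-1) 1 h1 _ _ H0 t (conj H1 H2)).
- by move=> x _; apply: cont_horner.
- by move=> x [/RltP Hx1 /RltP Hx2]; apply/RleP; apply: Hp; rewrite Hx1 Hx2.
Qed.

Lemma zero_on (p : {poly R}) (a b : R) : a < b ->
  (forall t, a < t < b -> p.[t] = 0) -> p = 0.
Proof.
move=> Hab Hz; apply/eqP; apply/negPn/negP => Hp.
pose rs := [seq a + (b - a) / (i.+2)%:R | i <- iota 0 (size p)].
suff: (size rs < size p)%N by rewrite size_map size_iota ltnn.
apply: (max_poly_roots Hp).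
- apply/allP => x /mapP[i _ ->]; apply/eqP; apply: Hz.
  have hw : 0 < (i.+2)%:R^-1 :> R by rewrite invr_gt0 ltr0n.
  have hw1 : (i.+2)%:R^-1 < 1 :> R by rewrite invf_lt1 ?ltr0n // ltr1n.
  rewrite mulrC; apply/andP; split; first by rewrite ltrDl mulr_gt0 // subr_gt0.
  move: ((i.+2)%:R^-1) hw hw1 => w hw hw1; nra.
- rewrite map_inj_uniq ?iota_uniq // => i j /addrI /mulfI.
  rewrite subr_eq0 eq_sym (lt_eqF Hab) => /(_ isT) /invr_inj /eqP.
  by rewrite eqr_nat => /eqP [].
Qed.

Lemma ip_ext p q : (forall t, p.[t] = q.[t]) -> ip p = ip q.
Proof. by move=> H; apply: RInt_ext => x _; rewrite H. Qed.

Definition refl (p : {poly R}) := \poly_(i < size p) ((-1)^+i * p`_i).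

Lemma horner_refl p t : (refl p).[t] = p.[-t].
Proof.
rewrite horner_poly horner_coef; apply: eq_bigr => i _.
by rewrite [(- t)^+i]exprNn mulrCA mulrA.
Qed.

Lemma size_refl p : (size (refl p) <= size p)%N.
Proof. exact: size_poly. Qed.

Lemma coef_refl p i : (refl p)`_i = (-1)^+i * p`_i.
Proof.
rewrite coef_poly; case: ifP => // /negbT; rewrite -leqNgt => H.
by rewrite (leq_sizeP _ _ (leqnn _) _ H) mulr0.
Qed.

Lemma ip_refl p : ip (refl p) = ip p.
Proof.
rewrite /ip (RInt_ext _ (fun t => p.[-t])); last by move=> x _; rewrite horner_refl.
exact: (Ana.RInt_refl (fun t => p.[t]) 1 (exi p _ _)).
Qed.

Definition orth (n : nat) (T : {poly R}) :=
  forall q : {poly R}, (size q <= n.+1)%N -> ip (T * q) = 0.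

Lemma orthD n T1 T2 : orth n T1 -> orth n T2 -> orth n (T1 + T2).
Proof. by move=> H1 H2 q Hq; rewrite mulrDl ipD H1 // H2 // addr0. Qed.

Lemma orthN n T : orth n T -> orth n (- T).
Proof. by move=> H q Hq; rewrite mulNr ipN H // oppr0. Qed.

Lemma orthB n T1 T2 : orth n T1 -> orth n T2 -> orth n (T1 - T2).
Proof. by move=> H1 H2; apply: orthD => //; apply: orthN. Qed.

Lemma orth_refl n T : orth n T -> orth n (refl T).
Proof.
move=> H q Hq.
rewrite (ip_ext _ (refl (T * refl q))); last first.
  by move=> t; rewrite horner_refl !hornerM !horner_refl opprK.
rewrite ip_refl; apply: H; exact: leq_trans (size_refl q) Hq.
Qed.

Lemma L1 n (T : {poly R}) : (size T <= n.+1)%N -> orth n T -> T = 0.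
Proof.
move=> Hs Ho.
have H0 := Ho T Hs.
have Hp : forall t, -1 < t < 1 -> 0 <= (T * T).[t].
  by move=> t _; rewrite hornerM -expr2 sqr_ge0.
have Hz := ip_zero_pos (T * T) Hp H0.
apply: (@zero_on T (-1) 1); first by rewrite gtrN.
by move=> t Ht; have := Hz _ Ht; rewrite hornerM => /eqP; rewrite mulf_eq0 orbb => /eqP.
Qed.

Lemma Leven n (T : {poly R}) : ~~ odd n -> (size T <= n.+3)%N -> T`_(n.+2) = 0 -> orth n T ->
  T.[1] + T.[-1] = 0.
Proof.
move=> Hn Hs Ht Ho.
have HG : T + refl T = 0.
  apply: (@L1 n); last by apply: orthD => //; apply: orth_refl.
  apply/leq_sizeP => j Hj; rewrite coefD coef_refl.
  move: Hj; rewrite leq_eqVlt => /orP[/eqP <-|].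
    by rewrite -signr_odd /= (negbTE Hn) expr1 mulN1r subrr.
  rewrite leq_eqVlt => /orP[/eqP <-|Hj]; first by rewrite Ht mulr0 addr0.
  by rewrite (leq_sizeP _ _ Hs) // mulr0 addr0.
by have := congr1 (horner^~ 1) HG; rewrite hornerD horner_refl horner0.
Qed.

Lemma Lodd n (T : {poly R}) : (size T <= n.+3)%N -> T`_(n.+2) = 0 -> T`_(n.+1) = 0 -> orth n T ->
  T = 0.
Proof.
move=> Hs H2 H1 Ho; apply: (@L1 n) => //.
apply/leq_sizeP => j; rewrite leq_eqVlt => /orP[/eqP <- //|].
rewrite leq_eqVlt => /orP[/eqP <- //|Hj].
by rewrite (leq_sizeP _ _ Hs).
Qed.


Definition dv2 (p : {poly R}) := (p %/ ('X - 1%:P)) %/ ('X - (-1)%:P).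

Lemma dv2_spec p : p.[1] = 0 -> p.[-1] = 0 ->
  (forall t, p.[t] = (dv2 p).[t] * (t + 1) * (t - 1)) /\ size (dv2 p) = (size p - 2)%N.
Proof.
move=> H1 Hm1.
set q := p %/ ('X - 1%:P).
have Hq : q * ('X - 1%:P) = p by apply: divpK; rewrite dvdp_XsubCl; apply/rootP.
have Hq1 : q.[-1] = 0.
  have := congr1 (horner^~ (-1)) Hq; rewrite hornerM hornerXsubC Hm1 => /eqP.
  by rewrite mulf_eq0 => /orP[/eqP //| /eqP H2]; exfalso; lra.
have Hr : dv2 p * ('X - (-1)%:P) = q by apply: divpK; rewrite dvdp_XsubCl; apply/rootP.
split.
  move=> t; rewrite -{1}Hq -Hr !hornerM !hornerXsubC.
  by rewrite opprK.
rewrite /dv2 !size_divp ?polyXsubC_eq0 // !size_XsubC /=; by rewrite -subnDA.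
Qed.

Lemma L3 n (T : {poly R}) : (size T <= n.+3)%N -> orth n T -> T.[1] = 0 -> T.[-1] = 0 ->
  T = 0.
Proof.
move=> Hs Ho H1 Hm1.
have [Hf Hsz] := dv2_spec T H1 Hm1.
set U := dv2 T in Hf Hsz.
have HU : (size U <= n.+1)%N by rewrite Hsz leq_subLR.
have H0 : ip (- (T * U)) = 0 by rewrite ipN Ho // oppr0.
have Hp : forall t, -1 < t < 1 -> 0 <= (- (T * U)).[t].
  move=> t /andP[Ht1 Ht2]; rewrite hornerN hornerM Hf.
  have : (t + 1) * (t - 1) < 0 by rewrite pmulr_rlt0 ?subr_lt0 // -ltrBlDr sub0r.
  move: (U.[t]) => u H; have := sqr_ge0 u; rewrite expr2; nra.
have Hz := ip_zero_pos _ Hp H0.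
have HU0 : U = 0.
  apply: (@zero_on U (-1) 1); first by rewrite gtrN.
  move=> t Ht; have := Hz _ Ht; rewrite hornerN hornerM Hf.
  case/andP: Ht => Ht1 Ht2.
  have H : (t + 1) * (t - 1) < 0 by rewrite pmulr_rlt0 ?subr_lt0 // -ltrBlDr sub0r.
  move: (U.[t]) => u E.
  have E' : (u * u) * ((t + 1) * (t - 1)) = - (- (u * (t + 1) * (t - 1) * u)) by ring.
  rewrite E oppr0 in E'; move/eqP: E'.
  by rewrite mulf_eq0 (lt_eqF H) orbF mulf_eq0 orbb => /eqP.
apply: (@zero_on T (-1) 1); first by rewrite gtrN.
by move=> t _; rewrite Hf HU0 horner0 !mul0r.
Qed.

Lemma dv2_eq p : p.[1] = 0 -> p.[-1] = 0 -> p = dv2 p * ('X^2 - 1).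
Proof.
move=> H1 Hm1.
set q := p %/ ('X - 1%:P).
have Hq : q * ('X - 1%:P) = p by apply: divpK; rewrite dvdp_XsubCl; apply/rootP.
have Hq1 : q.[-1] = 0.
  have := congr1 (horner^~ (-1)) Hq; rewrite hornerM hornerXsubC Hm1 => /eqP.
  by rewrite mulf_eq0 => /orP[/eqP //| /eqP H2]; exfalso; lra.
have Hr : dv2 p * ('X - (-1)%:P) = q by apply: divpK; rewrite dvdp_XsubCl; apply/rootP.
rewrite -{1}Hq -Hr polyCN polyC1 opprK; ring.
Qed.

Definition Ev (s : nat) (c : nat -> nat -> R) (x y : R) :=
  \sum_(i < s) \sum_(j < s) c i j * x ^+ i * y ^+ j.
Definition trn (c : nat -> nat -> R) := fun i j => c j i.
Definition trY (s : nat) (c : nat -> nat -> R) (y0 : R) : {poly R} :=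
  \poly_(i < s) \sum_(j < s) c i j * y0 ^+ j.
Definition trX s c x0 := trY s (trn c) x0.
Definition bnd (s : nat) (c : nat -> nat -> R) := forall i j, (s <= i + j)%N -> c i j = 0.

Lemma horner_trY s c y0 x : (trY s c y0).[x] = Ev s c x y0.
Proof.
rewrite horner_poly; apply: eq_bigr => i _; rewrite mulr_suml.
by apply: eq_bigr => j _; rewrite mulrAC.
Qed.

Lemma Ev_trn s c x y : Ev s (trn c) y x = Ev s c x y.
Proof.
rewrite /Ev exchange_big; apply: eq_bigr => i _; apply: eq_bigr => j _.
by rewrite /trn mulrAC.
Qed.

Lemma horner_trX s c x0 y : (trX s c x0).[y] = Ev s c x0 y.
Proof. by rewrite /trX horner_trY Ev_trn. Qed.

Lemma bnd_trn s c : bnd s c -> bnd s (trn c).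
Proof. by move=> H i j Hij; rewrite /trn H // addnC. Qed.

Lemma bnd_le s t c : (s <= t)%N -> bnd s c -> bnd t c.
Proof. by move=> Hst H i j Hij; apply: H; exact: leq_trans Hst Hij. Qed.

Lemma coef_trY_top p c y0 : bnd p.+2 c -> (trY p.+2 c y0)`_p.+1 = c p.+1 0.
Proof.
move=> Hb; rewrite coef_poly ltnSn big_ord_recl expr0 mulr1 big1 ?addr0 //.
by move=> j _; rewrite Hb ?mul0r //; rewrite /= /bump /=; lia.
Qed.

Lemma coef_trY_next p c y0 : bnd p.+2 c -> (trY p.+2 c y0)`_p = c p 0 + c p 1 * y0.
Proof.
move=> Hb; rewrite coef_poly ltnS leqnSn big_ord_recl expr0 mulr1 big_ord_recl.
rewrite big1 ?addr0 /=; first by rewrite expr1.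
by move=> j _; rewrite Hb ?mul0r // /bump /=; lia.
Qed.

Lemma Ev_rows s c x y : Ev s c x y = \sum_(i < s) x ^+ i * (\sum_(j < s) c i j * y ^+ j).
Proof.
apply: eq_bigr => i _; rewrite mulr_sumr; apply: eq_bigr => j _.
by rewrite mulrCA mulrA.
Qed.

Definition rowp (s : nat) (c : nat -> nat -> R) (i : nat) : {poly R} := \poly_(j < s) c i j.

Lemma ydiv t s c : (t <= s)%N -> bnd t c -> trY s c 1 = 0 -> trY s c (-1) = 0 ->
  exists c', bnd (t - 2) c' /\ (forall i j, (i + j + 3 = t)%N -> c' i j = c i (j + 2)%N) /\
    forall x y, Ev s c x y = (y ^+ 2 - 1) * Ev s c' x y.
Proof.
move=> Hts Hb H1 Hm1.
have Hroot : forall i y0, trY s c y0 = 0 -> (rowp s c i).[y0] = 0.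
  move=> i y0 H; case: (ltnP i s) => Hi.
    have := congr1 (fun p : {poly R} => p`_i) H; rewrite coef0 coef_poly Hi => <-.
    by rewrite horner_poly.
  have -> : rowp s c i = 0.
    apply/polyP => j; rewrite coef_poly coef0; case: ifP => // _; apply: Hb; lia.
  by rewrite horner0.
have Hsz : forall i, (size (rowp s c i) <= t - i)%N.
  move=> i; apply/leq_sizeP => j Hj; rewrite coef_poly; case: ifP => // _.
  apply: Hb; lia.
pose c' := fun i j => (dv2 (rowp s c i))`_j.
have Hsz' : forall i, (size (dv2 (rowp s c i)) <= t - i - 2)%N.
  move=> i; have [_ ->] := dv2_spec _ (Hroot i 1 H1) (Hroot i (-1) Hm1).
  by rewrite leq_sub2r.
exists c'; split; [|split].
- move=> i j Hij; rewrite /c'; apply: (leq_sizeP _ _ (Hsz' i)); lia.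
- move=> i j Hij.
  have E := dv2_eq _ (Hroot i 1 H1) (Hroot i (-1) Hm1).
  have := congr1 (fun p : {poly R} => p`_(j + 2)) E.
  rewrite /= coef_poly ifT; last by lia.
  move=> ->; rewrite mulrBr mulr1 coefB coefMXn ltnNge leq_addl /= addnK.
  rewrite [X in _ - X](leq_sizeP _ _ (Hsz' i)) ?subr0 //; lia.
- move=> x y; rewrite Ev_rows (Ev_rows s c') mulr_sumr; apply: eq_bigr => i _.
  have Hh : (\sum_(j < s) c i j * y ^+ j) = (rowp s c i).[y] by rewrite horner_poly.
  rewrite Hh (dv2_eq _ (Hroot i 1 H1) (Hroot i (-1) Hm1)) hornerM.
  rewrite (@horner_coef_wide _ s); last first.
    apply: leq_trans (Hsz' i) _; lia.
  rewrite hornerD hornerN hornerXn hornerC /c'.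
  ring.
Qed.

Lemma tr_zero_div s c c' x0 : (forall x y, Ev s c x y = (y ^+ 2 - 1) * Ev s c' x y) ->
  trX s c x0 = 0 -> trX s c' x0 = 0.
Proof.
move=> E H; have h12 : (1:R) < 2 by rewrite ltr1n.
apply: (@zero_on _ 1 2 h12).
move=> y /andP[Hy1 Hy2]; rewrite horner_trX.
have := congr1 (horner^~ y) H; rewrite horner_trX horner0 E => /eqP.
rewrite mulf_eq0 => /orP[/eqP|/eqP //] Hc; exfalso.
have Hy0 : 0 < y by exact: lt_trans ltr01 Hy1.
have Hp : 0 < (y - 1) * (y + 1) by rewrite mulr_gt0 ?subr_gt0 // addr_gt0 // ltr01.
move: Hc; have -> : y ^+ 2 - 1 = (y - 1) * (y + 1) by ring.
by move=> Hc; move: Hp; rewrite Hc ltxx.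
Qed.

Lemma div4 s c : bnd s c ->
  (forall i j, (2 <= i)%N -> (2 <= j)%N -> (i + j)%N = s.-1 -> c i j = 0) ->
  trY s c 1 = 0 -> trY s c (-1) = 0 -> trX s c 1 = 0 -> trX s c (-1) = 0 ->
  exists cQ, bnd (s - 5) cQ /\
    forall x y, Ev s c x y = (y ^+ 2 - 1) * ((x ^+ 2 - 1) * Ev s cQ x y).
Proof.
move=> Hb Htop HY1 HYm1 HX1 HXm1.
have [c' [Hb' [Ht' E']]] := ydiv s s c (leqnn s) Hb HY1 HYm1.
have HX1' := tr_zero_div _ _ _ _ E' HX1.
have HXm1' := tr_zero_div _ _ _ _ E' HXm1.
have Hle : (s - 2 <= s)%N by apply: leq_subr.
have [c'' [Hb'' [Ht'' E'']]] := ydiv (s - 2) s (trn c') Hle (bnd_trn _ _ Hb') HX1' HXm1'.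
exists (trn c''); split.
- move=> i j Hij; rewrite /trn.
  case: (boolP (i + j + 5 == s)%N) => [/eqP Hs|Hs].
    rewrite Ht''; last by lia.
    rewrite /trn Ht'; last by lia.
    apply: Htop; lia.
  apply: Hb''; lia.
- move=> x y; rewrite E' -Ev_trn E'' Ev_trn.
  done.
Qed.

Lemma szD (p q : {poly R}) n : (size p <= n)%N -> (size q <= n)%N -> (size (p + q)%R <= n)%N.
Proof. by move=> hp hq; apply: (leq_trans (size_polyD _ _)); rewrite geq_max hp hq. Qed.

Lemma szB (p q : {poly R}) n : (size p <= n)%N -> (size q <= n)%N -> (size (p - q)%R <= n)%N.
Proof. by move=> hp hq; apply: szD => //; rewrite size_polyN. Qed.

Lemma sz_trY s c y0 : (size (trY s c y0) <= s)%N.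
Proof. exact: size_poly. Qed.

Lemma sz_trX s c x0 : (size (trX s c x0) <= s)%N.
Proof. exact: size_poly. Qed.

Arguments Leven {n T}. Arguments Lodd {n T}. Arguments szB {p q n}. Arguments szD {p q n}.
Arguments orthB {n T1 T2}. Arguments orthD {n T1 T2}.

Lemma corner k c : bnd (2 * k).+3 c ->
  c (2 * k).+2 0 = - c 0 (2 * k).+2 ->
  c (2 * k).+1 1 + c 1 (2 * k).+1 = 0 ->
  orth (2 * k) (trY (2 * k).+3 c (-1)) -> orth (2 * k) (trY (2 * k).+3 c 1) ->
  orth (2 * k) (trX (2 * k).+3 c 1) -> orth (2 * k) (trX (2 * k).+3 c (-1)) ->
  [/\ trY (2 * k).+3 c (-1) = 0, trY (2 * k).+3 c 1 = 0,
      trX (2 * k).+3 c 1 = 0 & trX (2 * k).+3 c (-1) = 0].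
Proof.
set s := (2 * k).+3 => Hb Htop Hnext O1 O3 O2 O4.
set T1 := trY s c (-1); set T3 := trY s c 1; set T2 := trX s c 1; set T4 := trX s c (-1).
have Hbt := bnd_trn _ _ Hb.
have ev : ~~ odd (2 * k) by rewrite oddM.
have t1 : T1`_(2 * k).+2 = c (2 * k).+2 0 by apply: coef_trY_top.
have t3 : T3`_(2 * k).+2 = c (2 * k).+2 0 by apply: coef_trY_top.
have t2 : T2`_(2 * k).+2 = c 0 (2 * k).+2 by apply: coef_trY_top.
have t4 : T4`_(2 * k).+2 = c 0 (2 * k).+2 by apply: coef_trY_top.
have n1 : T1`_(2 * k).+1 = c (2 * k).+1 0 + c (2 * k).+1 1 * (-1) by apply: coef_trY_next.
have n3 : T3`_(2 * k).+1 = c (2 * k).+1 0 + c (2 * k).+1 1 * 1 by apply: coef_trY_next.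
have n2 : T2`_(2 * k).+1 = c 0 (2 * k).+1 + c 1 (2 * k).+1 * 1 by apply: coef_trY_next.
have n4 : T4`_(2 * k).+1 = c 0 (2 * k).+1 + c 1 (2 * k).+1 * (-1) by apply: coef_trY_next.
have s1 := sz_trY s c (-1); have s3 := sz_trY s c 1.
have s2 := sz_trX s c 1; have s4 := sz_trX s c (-1).
have v1a : T1.[1] = Ev s c 1 (-1) by rewrite horner_trY.
have v4a : T1.[-1] = Ev s c (-1) (-1) by rewrite horner_trY.
have v2a : T3.[1] = Ev s c 1 1 by rewrite horner_trY.
have v3a : T3.[-1] = Ev s c (-1) 1 by rewrite horner_trY.
have v2b : T2.[1] = Ev s c 1 1 by rewrite horner_trX.
have v1b : T2.[-1] = Ev s c 1 (-1) by rewrite horner_trX.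
have v3b : T4.[1] = Ev s c (-1) 1 by rewrite horner_trX.
have v4b : T4.[-1] = Ev s c (-1) (-1) by rewrite horner_trX.
have c1 : (T1 - T3)`_(2 * k).+2 = 0 by rewrite coefB t1 t3 subrr.
have c2 : (T1 + T2)`_(2 * k).+2 = 0 by rewrite coefD t1 t2 Htop addrC subrr.
have c3 : (T1 + T4)`_(2 * k).+2 = 0 by rewrite coefD t1 t4 Htop addrC subrr.
have c4 : (T2 - T4)`_(2 * k).+2 = 0 by rewrite coefB t2 t4 subrr.
have c5 : (T2 - T4 + T3 - T1)`_(2 * k).+2 = 0.
  by rewrite !coefB coefD !coefB t1 t2 t3 t4 subrr add0r subrr.
have c6 : (T2 - T4 + T3 - T1)`_(2 * k).+1 = 0.
  rewrite !coefB coefD !coefB n1 n2 n3 n4.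
  have -> : c (2 * k).+1 1 = - c 1 (2 * k).+1 by apply/eqP; rewrite -subr_eq0 opprK Hnext.
  ring.
have e1 := Leven ev (szB s1 s3) c1 (orthB O1 O3).
have e2 := Leven ev (szD s1 s2) c2 (orthD O1 O2).
have e3 := Leven ev (szD s1 s4) c3 (orthD O1 O4).
have e4 := Leven ev (szB s2 s4) c4 (orthB O2 O4).
have W0 := Lodd (szB (szD (szB s2 s4) s3) s1) c5 c6 (orthB (orthD (orthB O2 O4) O3) O1).
have e5 := congr1 (horner^~ 1) W0.
move: e1 e2 e3 e4 e5; rewrite /= !hornerD !hornerN horner0.
rewrite v1a v4a v2a v3a v2b v1b v3b v4b.
move=> e1 e2 e3 e4 e5.
have Z1 : Ev s c 1 (-1) = 0 by lra.
have Z2 : Ev s c 1 1 = 0 by lra.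
have Z3 : Ev s c (-1) 1 = 0 by lra.
have Z4 : Ev s c (-1) (-1) = 0 by lra.
split.
- by apply: (L3 _ _ s1 O1); rewrite -/T1 ?v1a ?v4a.
- by apply: (L3 _ _ s3 O3); rewrite -/T3 ?v2a ?v3a.
- by apply: (L3 _ _ s2 O2); rewrite -/T2 ?v2b ?v1b.
- by apply: (L3 _ _ s4 O4); rewrite -/T4 ?v3b ?v4b.
Qed.

Lemma sum_widen (F : nat -> R) t s : (t <= s)%N -> (forall i, (t <= i)%N -> F i = 0) ->
  \sum_(i < s) F i = \sum_(i < t) F i.
Proof.
move=> Hts HF; rewrite [RHS](big_ord_widen _ _ Hts) [RHS]big_mkcond.
apply: eq_bigr => i _; case: ifP => // /negbT; rewrite -leqNgt => H.
exact: HF.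
Qed.

Lemma Ev_widen s t c x y : bnd t c -> (t <= s)%N -> Ev s c x y = Ev t c x y.
Proof.
move=> Hb Hts; rewrite /Ev (@sum_widen (fun i => \sum_(j < s) c i j * x ^+ i * y ^+ j) t s Hts).
  apply: eq_bigr => i _; apply: (@sum_widen (fun j => c i j * x ^+ i * y ^+ j) t s Hts) => j Hj.
  by rewrite Hb ?mul0r //; apply: leq_trans Hj (leq_addl _ _).
move=> i Hi; apply: big1 => j _.
by rewrite Hb ?mul0r //; apply: leq_trans Hi (leq_addr _ _).
Qed.

Definition trunc (n : nat) (c : nat -> nat -> R) i j := if (i + j <= n)%N then c i j else 0.

Lemma bnd_trunc n c : bnd n.+1 (trunc n c).
Proof. by move=> i j Hij; rewrite /trunc leqNgt Hij. Qed.

Lemma poly2_Ev n c x y : poly2 n c x y = Ev n.+1 (trunc n c) x y.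
Proof.
rewrite /poly2 sum_f_R0E big_mkord; apply: eq_bigr => [[i Hi]] _ /=.
rewrite sum_f_R0E big_mkord.
have Hle : ((n - i).+1 <= n.+1)%N by rewrite ltnS leq_subr.
rewrite [RHS](@sum_widen (fun j => trunc n c i j * x ^+ i * y ^+ j) _ _ Hle); last first.
  by move=> j Hj; rewrite /trunc ifN ?mul0r // -ltnNge; lia.
apply: eq_bigr => [[j Hj]] _ /=.
by rewrite /trunc ifT ?RpowE //; lia.
Qed.

Lemma Ev_poly2 n s c x y : bnd n.+1 c -> (n.+1 <= s)%N -> Ev s c x y = poly2 n c x y.
Proof.
move=> Hb Hs; rewrite poly2_Ev (Ev_widen _ _ _ _ _ Hb Hs) /Ev.
apply: eq_bigr => i _; apply: eq_bigr => j _; rewrite /trunc; case: ifP => // /negbT.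
by rewrite -ltnNge => H; rewrite Hb.
Qed.

Lemma poly1_horner n (q : {poly R}) t : (size q <= n.+1)%N ->
  poly1 n (fun i => q`_i) t = q.[t].
Proof.
move=> Hs; rewrite /poly1 sum_f_R0E big_mkord (@horner_coef_wide _ n.+1 _ _ Hs).
by apply: eq_bigr => i _; rewrite RpowE.
Qed.

Lemma EvD s c1 c2 x y : Ev s (fun i j => c1 i j + c2 i j) x y = Ev s c1 x y + Ev s c2 x y.
Proof.
rewrite /Ev -big_split; apply: eq_bigr => i _; rewrite -big_split.
by apply: eq_bigr => j _; rewrite !mulrDl.
Qed.

Lemma EvZ s a c1 x y : Ev s (fun i j => a * c1 i j) x y = a * Ev s c1 x y.
Proof.
rewrite /Ev mulr_sumr; apply: eq_bigr => i _; rewrite mulr_sumr.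
by apply: eq_bigr => j _; rewrite !mulrA.
Qed.

Lemma EvB s c1 c2 x y : Ev s (fun i j => c1 i j - c2 i j) x y = Ev s c1 x y - Ev s c2 x y.
Proof.
rewrite (EvD s c1 (fun i j => - c2 i j)).
have -> : (fun i j => - c2 i j) = (fun i j => (-1) * c2 i j).
  by apply: FunctionalExtensionality.functional_extensionality => i;
     apply: FunctionalExtensionality.functional_extensionality => j; rewrite mulN1r.
by rewrite EvZ mulN1r.
Qed.

Definition dlt (i0 j0 : nat) (i j : nat) : R := if (i == i0) && (j == j0) then 1 else 0.

Lemma Ev_dlt s i0 j0 x y : (i0 < s)%N -> (j0 < s)%N -> Ev s (dlt i0 j0) x y = x ^+ i0 * y ^+ j0.
Proof.
move=> Hi Hj; rewrite /Ev (bigD1 (Ordinal Hi)) //= (bigD1 (Ordinal Hj)) //=.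
rewrite /dlt !eqxx /= mul1r big1 ?addr0.
  rewrite big1 ?addr0 // => i /negbTE Hn; apply: big1 => j _.
  by rewrite -val_eqE /= in Hn; rewrite Hn /= !mul0r.
by move=> j /negbTE Hn; rewrite -val_eqE /= in Hn; rewrite Hn !mul0r.
Qed.

Definition cER (m : nat) (cp : nat -> nat -> R) (a b : R) (i j : nat) : R :=
  trunc m cp i j + a * (dlt m 1 i j - dlt 1 m i j) + b * (dlt m.+1 0 i j - dlt 0 m.+1 i j).

Lemma Ev_cER m cp a b x y : Ev m.+2 (cER m cp a b) x y =
  poly2 m cp x y + a * (x ^+ m * y - x * y ^+ m) + b * (x ^+ m.+1 - y ^+ m.+1).
Proof.
rewrite /cER EvD EvD EvZ EvZ EvB EvB !Ev_dlt // ?ltnS ?leqnSn //.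
rewrite (Ev_widen _ _ _ _ _ (bnd_trunc m cp)) // -poly2_Ev.
by rewrite !expr1 !expr0 mul1r mulr1.
Qed.

Lemma neqF (i j : nat) : i <> j -> (i == j) = false.
Proof. by move=> H; apply/eqP. Qed.

Lemma dlt0 i0 j0 i j : (i + j <> i0 + j0)%N -> dlt i0 j0 i j = 0.
Proof.
move=> H; rewrite /dlt; case: (i =P i0) => [Ei|_] //=; case: (j =P j0) => [Ej|_] //.
by exfalso; apply: H; rewrite Ei Ej.
Qed.

Lemma bnd_cER m cp a b : bnd m.+2 (cER m cp a b).
Proof.
move=> i j Hij; rewrite /cER (bnd_trunc m cp i j) ?(leq_trans (leqnSn _) Hij) //.
rewrite !dlt0; try lia.
by rewrite /= !RminusE !RmultE !RplusE !subrr !mulr0 !addr0.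
Qed.

Lemma dltNi i0 j0 i j : i <> i0 -> dlt i0 j0 i j = 0.
Proof. by move=> H; rewrite /dlt; case: (i =P i0). Qed.

Lemma dltNj i0 j0 i j : j <> j0 -> dlt i0 j0 i j = 0.
Proof. by move=> H; rewrite /dlt; case: (j =P j0) => //; rewrite andbF. Qed.

Lemma dlt1 i0 j0 : dlt i0 j0 i0 j0 = 1.
Proof. by rewrite /dlt !eqxx. Qed.

Lemma dlt_sym m : dlt m 1 1 m = dlt 1 m m 1.
Proof. by rewrite /dlt andbC. Qed.

Lemma trunc0 m cp i j : (m < i + j)%N -> trunc m cp i j = 0.
Proof. by move=> H; apply: bnd_trunc. Qed.

Ltac Rconv := rewrite ?RminusE ?RmultE ?RplusE ?RoppE.

Lemma cER_top n cp a b :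
  cER n.+1 cp a b n.+2 0 = - cER n.+1 cp a b 0 n.+2.
Proof.
rewrite /cER !trunc0 ?addn0 ?add0n //.
rewrite (dltNj _ 1 _ 0) //.
rewrite (dltNj _ n.+1 _ 0) //.
rewrite (dltNi 0 _ n.+2 _) //.
rewrite (dltNi n.+1 _ 0 _) //.
rewrite (dltNi 1 _ 0 _) //.
rewrite (dltNi n.+2 _ 0 _) //.
rewrite !dlt1; Rconv; ring.
Qed.

Lemma cER_next n cp a b :
  cER n.+1 cp a b n.+1 1 + cER n.+1 cp a b 1 n.+1 = 0.
Proof.
rewrite /cER !trunc0 ?addn1 ?add1n //.
rewrite (dltNj _ 0 _ 1) //.
rewrite (dltNj _ n.+2 _ 1) //.
rewrite (dltNj _ 0 _ n.+1) //.
rewrite (dltNi 0 _ 1 _) //.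
rewrite dlt_sym !dlt1; Rconv; ring.
Qed.

Lemma cER_in m cp a b i j : (2 <= i)%N -> (2 <= j)%N -> (i + j)%N = m.+1 ->
  cER m cp a b i j = 0.
Proof.
move=> Hi Hj Hij; rewrite /cER trunc0; last by lia.
rewrite (dltNj _ 1 _ j); last by lia.
rewrite (dltNi 1 _ i _); last by lia.
rewrite (dltNj _ 0 _ j); last by lia.
rewrite (dltNi 0 _ i _); last by lia.
by Rconv; rewrite !subrr !mulr0 !addr0.
Qed.

Lemma orth_of (f : R -> R) (T : {poly R}) n :
  (forall t, Rle (-1) t /\ Rle t 1 -> f t = T.[t]) ->
  (forall d : nat -> R, forall pr : Riemann_integrable (fun t => f t * poly1 n d t) (-1) 1,
     RiemannInt pr = 0) ->
  orth n T.
Proof.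
move=> Hf H q Hq.
pose g := fun t => f t * poly1 n (fun i => q`_i) t.
have Eg : forall t, Rlt (Rmin (-1) 1) t /\ Rlt t (Rmax (-1) 1) -> (T * q).[t] = g t.
  move=> t; rewrite Rmin_left ?Rmax_right; try exact: Ana.Rle_m11.
  move=> Ht; rewrite hornerM /g Hf ?poly1_horner //.
  exact: Ana.Rlt_le2.
have ex : ex_RInt g (-1) 1 := ex_RInt_ext _ _ _ _ Eg (exi (T * q) _ _).
have := H (fun i => q`_i) (ex_RInt_Reals_0 _ _ _ ex).
rewrite -RInt_Reals => <-.
exact: RInt_ext.
Qed.

Lemma sqm1_neq0 (y : R) : Rlt (-1) y /\ Rlt y 1 -> y ^+ 2 - 1 != 0.
Proof.
move=> [/RltP H1 /RltP H2].
have : (y - 1) * (y + 1) < 0 by rewrite nmulr_rlt0 ?subr_lt0 // -ltrBlDr sub0r.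
by rewrite (_ : y ^+ 2 - 1 = (y - 1) * (y + 1)); [move/lt_eqF => -> | ring].
Qed.

Lemma Ev0 s c x y : (forall i j, c i j = 0) -> Ev s c x y = 0.
Proof. by move=> H; apply: big1 => i _; apply: big1 => j _; rewrite H !mul0r. Qed.

Lemma final_core (k : nat) (I : list (R * R)) (v : R -> R -> R) :
  (forall z, In z I -> (Rlt (-1) (fst z) /\ Rlt (fst z) 1) /\ (Rlt (-1) (snd z) /\ Rlt (snd z) 1)) ->
  ((2 <= k)%coq_nat -> unisolvent (Nat.sub (Nat.mul 2 k) 3) I) ->
  inER (Nat.add (Nat.mul 2 k) 1) v ->
  (forall g, In g edges -> forall d : nat -> R,
     forall pr : Riemann_integrable
                   (fun t => v (fst (g t)) (snd (g t)) * poly1 (Nat.mul 2 k) d t) (-1) 1,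
       RiemannInt pr = 0) ->
  (forall z, In z I -> v (fst z) (snd z) = 0) ->
  forall x y, inK x y -> v x y = 0.
Proof.
move=> HI Hk2 HER Hedge Hvan.
have Em : Nat.add (Nat.mul 2 k) 1 = (2 * k).+1 by lia.
rewrite Em in HER.
case: HER => [p [a [b [[cp Hcp] Hv]]]].
set m := (2 * k).+1.
set c := cER m cp a b.
set s := (2 * k).+3.
have HvEv : forall x y, inK x y -> v x y = Ev s c x y.
  move=> x y Hxy; rewrite Hv // Hcp // Ev_cER !RpowE.
  done.
have Hb : bnd s c := bnd_cER m cp a b.
have H1 := Hedge _ (or_introl erefl).
have H2 := Hedge _ (or_intror (or_introl erefl)).
have H3 := Hedge _ (or_intror (or_intror (or_introl erefl))).
have H4 := Hedge _ (or_intror (or_intror (or_intror (or_introl erefl)))).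
have O1 : orth (2 * k) (trY s c (-1)).
  apply: (orth_of (fun t => v t (-1))); last exact: H1.
  by move=> t Ht; rewrite horner_trY HvEv //; case: (Ana.inK_edges _ Ht).
have O2 : orth (2 * k) (trX s c 1).
  apply: (orth_of (fun t => v 1 t)); last exact: H2.
  by move=> t Ht; rewrite horner_trX HvEv //; case: (Ana.inK_edges _ Ht) => _ [_ []].
have O3 : orth (2 * k) (trY s c 1).
  apply: (orth_of (fun t => v t 1)); last exact: H3.
  by move=> t Ht; rewrite horner_trY HvEv //; case: (Ana.inK_edges _ Ht) => _ [].
have O4 : orth (2 * k) (trX s c (-1)).
  apply: (orth_of (fun t => v (-1) t)); last exact: H4.
  by move=> t Ht; rewrite horner_trX HvEv //; case: (Ana.inK_edges _ Ht) => _ [_ []].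
have [Z1 Z3 Z2 Z4] := corner _ _ Hb (cER_top _ _ _ _) (cER_next _ _ _ _) O1 O3 O2 O4.
have Htop : forall i j, (2 <= i)%N -> (2 <= j)%N -> (i + j)%N = s.-1 -> c i j = 0.
  by move=> i j Hi Hj Hij; apply: cER_in.
have [cQ [HbQ EQ]] := div4 _ _ Hb Htop Z3 Z1 Z2 Z4.
have HQ0 : forall x y, inK x y -> Ev s cQ x y = 0.
  case: (leqP k 1) => Hk.
    move=> x y _; apply: Ev0 => i j; apply: HbQ; lia.
  move=> x y Hxy.
  have Hn : ((Nat.sub (Nat.mul 2 k) 3).+1 <= s)%N by lia.
  have HbQ' : bnd (Nat.sub (Nat.mul 2 k) 3).+1 cQ by apply: (bnd_le _ _ _ _ HbQ); lia.
  have H2k : (2 <= k)%coq_nat.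
    by apply/ssrnat.leP.
  have := Hk2 H2k (fun x y => Ev s cQ x y) (fun _ _ => 0).
  apply => //.
  - by exists cQ => x0 y0 _; rewrite (Ev_poly2 _ _ _ _ _ HbQ' Hn).
  - exists (fun _ _ => 0) => x0 y0 _; rewrite poly2_Ev Ev0 // => i j.
    by rewrite /trunc; case: ifP.
  - move=> z Hz /=.
    have := Hvan z Hz; rewrite HvEv; last exact: Ana.inK_int _ _ (HI z Hz).
    rewrite EQ => /eqP; rewrite !mulf_eq0.
    case: (HI z Hz) => Hx Hy.
    by rewrite (negbTE (sqm1_neq0 _ Hy)) (negbTE (sqm1_neq0 _ Hx)) /= => /eqP.
move=> x y Hxy; by rewrite HvEv // EQ HQ0 // !mulr0.
Qed.

End Aux.

Theorem theorem3p5 (k : nat) (I : list (R * R)) (v : R -> R -> R) :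
  (* I: (2k-1)(k-1) interior points, unisolvent for P_{2k-3}; empty if k <= 1 *)
  length I = ((2 * k - 1) * (k - 1))%nat ->
  (forall z, In z I -> -1 < fst z < 1 /\ -1 < snd z < 1) ->
  ((k <= 1)%nat -> I = nil) ->
  ((2 <= k)%nat -> unisolvent (2 * k - 3) I) ->
  (* v in ER_m with m = 2k+1 *)
  inER (2 * k + 1) v ->
  (* vanishing edge moments against P_{2k}(e) on every edge *)
  (forall g, In g edges -> forall d : nat -> R,
     forall pr : Riemann_integrable
                   (fun t => v (fst (g t)) (snd (g t)) * poly1 (2 * k) d t) (-1) 1,
       RiemannInt pr = 0) ->
  (* vanishing at the points of I *)
  (forall z, In z I -> v (fst z) (snd z) = 0) ->
  forall x y, inK x y -> v x y = 0.
Proof.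
  intros Hlen HI Hk1 Hk2 HER Hedge Hvan.
  exact (Aux.final_core k I v HI Hk2 HER Hedge Hvan).
Qed.
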